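(* Suppose the family of update functions $\mathrm{Upd}$ satisfies P1, P3 and P4. Let $\mathcal{M}=(W,\mathcal{F})$ be a measure space, $\Pr\in\Delta_{\mathcal{M}}$, and $A\subseteq B$ with $A,B\in\mathcal{F}$. If $\Pr(A|B)=1$ (respectively $\Pr(A|B)=0$), then $\Pr'(A)=1$ (respectively $\Pr'(A)=0$) for all $\Pr'\in\mathrm{Upd}^{\mathcal{M}}(\Pr,B)$.
   Context: A measure space is a pair $\mathcal{M}=(W,\mathcal{F})$ with $\mathcal{F}$ an algebra of subsets of $W$; $\Delta_{\mathcal{M}}$ is the set of all probability measures on $\mathcal{M}$. An update function on $\mathcal{M}$ is a map $\mathrm{Upd}^{\mathcal{M}}:2^{\Delta_{\mathcal{M}}}\times\mathcal{F}\to 2^{\Delta_{\mathcal{M}}}$ such that $\mathrm{Upd}^{\mathcal{M}}(X,B)=\emptyset$ whenever $\Pr(B)=0$ for all $\Pr\in X$; $\mathrm{Upd}^{\mathcal{M}}(\Pr,B)$ means $\mathrm{Upd}^{\mathcal{M}}(\{\Pr\},B)$. A family $\mathrm{Upd}=\{\mathrm{Upd}^{\mathcal{M}}\}$ has one update function for each measure space. $\Pr(A|B)=\Pr(A\cap B)/\Pr(B)$. Postulates (for all $\mathcal{M}=(W,\mathcal{F})$, $X\subseteq\Delta_{\mathcal{M}}$, $B,C\in\mathcal{F}$): P1: $\mathrm{Upd}^{\mathcal{M}}(X,B)\subseteq\{\Pr\in\Delta_{\mathcal{M}}:\Pr(B)=1\}$. P3: $\mathrm{Upd}^{\mathcal{M}}(\mathrm{Upd}^{\mathcal{M}}(X,B),C)=\mathrm{Upd}^{\mathcal{M}}(X,B\cap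 C)$. P4: $\mathrm{Upd}^{\mathcal{M}}(X,B)=X$ if $\Pr(B)=1$ for all $\Pr\in X$. *)

(* Defs.v *)
From Stdlib Require Import Reals.
Open Scope R_scope.

Record algebra (W : Type) := {
  amem : (W -> Prop) -> Prop;
  alg_full : amem (fun _ => True);
  alg_compl : forall A, amem A -> amem (fun w => ~ A w);
  alg_union : forall A B, amem A -> amem B -> amem (fun w => A w \/ B w)
}.
Arguments amem {W} a _.

Record MeasureSpace := {
  carrier : Type;
  msalg : algebra carrier
}.

Definition inF (M : MeasureSpace) (A : carrier M -> Prop) : Prop :=
  amem (msalg M) A.

(* It is
   represented as a function on all subsets of W which is 0 off F, so that
   elements of Delta_M correspond exactly to probability measures on F. *)
Record prob (M : MeasureSpace) := {
  pfun :> (carrier M -> Prop) -> R;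
  p_off : forall A, ~ inF M A -> pfun A = 0;
  p_nonneg : forall A, inF M A -> 0 <= pfun A;
  p_full : pfun (fun _ => True) = 1;
  p_add : forall A B, inF M A -> inF M B -> (forall w, ~ (A w /\ B w)) ->
            pfun (fun w => A w \/ B w) = pfun A + pfun B
}.

Definition cond {M : MeasureSpace} (P : prob M) (A B : carrier M -> Prop) : R :=
  P (fun w => A w /\ B w) / P B.

Definition single {M : MeasureSpace} (P : prob M) : prob M -> Prop :=
  fun Q => Q = P.

(* A family of update functions: one map 2^Delta_M x F -> 2^Delta_M per
   measure space (values at non-measurable B are irrelevant). *)
Definition UpdFamily : Type :=
  forall M : MeasureSpace, (prob M -> Prop) -> (carrier M -> Prop) -> (prob M -> Prop).

Definition is_update_family (Upd : UpdFamily) : Prop :=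
  forall (M : MeasureSpace) (X : prob M -> Prop) (B : carrier M -> Prop),
    inF M B -> (forall P, X P -> P B = 0) -> Upd M X B = (fun _ => False).

Definition P1 (Upd : UpdFamily) : Prop :=
  forall (M : MeasureSpace) (X : prob M -> Prop) (B : carrier M -> Prop),
    inF M B -> forall Q, Upd M X B Q -> Q B = 1.

Definition P3 (Upd : UpdFamily) : Prop :=
  forall (M : MeasureSpace) (X : prob M -> Prop) (B C : carrier M -> Prop),
    inF M B -> inF M C ->
    Upd M (Upd M X B) C = Upd M X (fun w => B w /\ C w).

Definition P4 (Upd : UpdFamily) : Prop :=
  forall (M : MeasureSpace) (X : prob M -> Prop) (B : carrier M -> Prop),
    inF M B -> (forall P, X P -> P B = 1) -> Upd M X B = X.

(* Main.v *)
Require Import Defs.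
From Stdlib Require Import Reals Lra Classical FunctionalExtensionality PropExtensionality.
Open Scope R_scope.

Lemma seteq {W : Type} (A B : W -> Prop) : (forall w, A w <-> B w) -> A = B.
Proof. intro H; extensionality w; apply propositional_extensionality; auto. Qed.

Lemma inF_compl M A : inF M A -> inF M (fun w => ~ A w).
Proof. intro; apply (alg_compl _ (msalg M)); auto. Qed.

Lemma inF_union M A B : inF M A -> inF M B -> inF M (fun w => A w \/ B w).
Proof. intros; apply (alg_union _ (msalg M)); auto. Qed.

Lemma inF_inter M A B : inF M A -> inF M B -> inF M (fun w => A w /\ B w).
Proof.
  intros HA HB.
  assert (E : (fun w => A w /\ B w) = (fun w => ~ ((~ A w) \/ (~ B w)))).
  { apply seteq; intro w; tauto. }
  rewrite E; apply inF_compl, inF_union; apply inF_compl; auto.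
Qed.

Lemma p_compl M (P : prob M) A : inF M A -> P (fun w => ~ A w) = 1 - P A.
Proof.
  intro HA.
  assert (E : P (fun w => A w \/ ~ A w) = P A + P (fun w => ~ A w)).
  { apply p_add; auto. apply inF_compl; auto. intros w [h1 h2]; auto. }
  assert (E2 : (fun w => A w \/ ~ A w) = (fun _ : carrier M => True)).
  { apply seteq; intro w; tauto. }
  rewrite E2, p_full in E; lra.
Qed.

Theorem lemma4p6 (Upd : UpdFamily) (HU : is_update_family Upd)
  (H1 : P1 Upd) (H3 : P3 Upd) (H4 : P4 Upd)
  (M : MeasureSpace) (Pr : prob M) (A B : carrier M -> Prop)
  (hA : inF M A) (hB : inF M B) (hAB : forall w, A w -> B w) :
  (cond Pr A B = 1 -> forall Q, Upd M (single Pr) B Q -> Q A = 1) /\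
  (cond Pr A B = 0 -> forall Q, Upd M (single Pr) B Q -> Q A = 0).
Proof.
  unfold cond.
  assert (EAB : (fun w => A w /\ B w) = A) by (apply seteq; intro w; split; [tauto | intro h; split; auto]).
  rewrite EAB.
  destruct (Req_dec (Pr B) 0) as [H0|Hn0].
  { assert (Hemp : Upd M (single Pr) B = fun _ => False).
    { apply HU; auto. intros P HP; unfold single in HP; subst; auto. }
    rewrite Hemp; split; intros _ Q HQ; contradiction. }
  split.
  - intros Hc Q HQ.
    assert (HPA : Pr A = Pr B).
    { apply (Rmult_eq_reg_r (/ Pr B)); [| apply Rinv_neq_0_compat; auto].
      unfold Rdiv in Hc; rewrite Hc, Rinv_r; auto. }
    set (C := fun w => A w \/ ~ B w).
    assert (hC : inF M C) by (apply inF_union; auto; apply inF_compl; auto).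
    assert (PC : Pr C = 1).
    { unfold C; rewrite p_add; auto. rewrite p_compl; auto; lra.
      apply inF_compl; auto. intros w [h1 h2]; auto. }
    assert (U1 : Upd M (single Pr) C = single Pr).
    { apply H4; auto. intros P HP; unfold single in HP; subst; auto. }
    rewrite <- U1, H3 in HQ; auto.
    assert (E : (fun w => C w /\ B w) = A).
    { apply seteq; intro w; unfold C; split; try tauto; intro; split; auto. }
    rewrite E in HQ.
    eapply H1; eauto.
  - intros Hc Q HQ.
    assert (HPA : Pr A = 0).
    { unfold Rdiv in Hc. apply Rmult_integral in Hc as [h|h]; auto.
      exfalso; apply (Rinv_neq_0_compat _ Hn0); auto. }
    set (D := fun w => ~ A w).
    assert (hD : inF M D) by (apply inF_compl; auto).
    assert (PD : Pr D = 1) by (unfold D; rewrite p_compl; auto; lra).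
    assert (U1 : Upd M (single Pr) D = single Pr).
    { apply H4; auto. intros P HP; unfold single in HP; subst; auto. }
    rewrite <- U1, H3 in HQ; auto.
    assert (hDB : inF M (fun w => D w /\ B w)) by (apply inF_inter; auto).
    pose proof (H1 _ _ _ hDB _ HQ) as Q1.
    pose proof (p_compl M Q _ hDB) as Qc.
    assert (E : (fun w => ~ (D w /\ B w)) = (fun w => A w \/ ~ B w)).
    { apply seteq; intro w; unfold D; tauto. }
    change (Q (fun w => ~ (D w /\ B w)) = 1 - Q (fun w => D w /\ B w)) in Qc.
    rewrite E, p_add in Qc; auto.
    2: apply inF_compl; auto.
    2: intros w [h1 h2]; auto.
    pose proof (p_nonneg M Q A hA).
    pose proof (p_nonneg M Q _ (inF_compl M B hB)).
    lra.
Qed.
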